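(* Let $\alpha$ be a probability distribution on $[d]$ with $\alpha_1\ge\cdots\ge\alpha_d$ and fix $k\in[d]$. Then \[ n\mapsto \mathbb E_{\lambda\sim\mathrm{SW}^n(\alpha)}\big[(\lambda_1+\cdots+\lambda_k)-(\alpha_1+\cdots+\alpha_k)n\big] \] is a nondecreasing function of $n\in\mathbb N$.
   Context: $\mathrm{SW}^n(\alpha)$ is the law of the RSK shape $\mathrm{shRSK}(\boldsymbol w)$ (Young diagram $\lambda_1\ge\cdots\ge\lambda_d\ge0$ whose first $k$ rows sum to the maximum total length of $k$ disjoint weakly increasing subsequences of $\boldsymbol w$), where $\boldsymbol w\in[d]^n$ has i.i.d. letters with law $\alpha$. *)

(* Defs.v *)
From HB Require Import structures.
From mathcomp Require Import all_boot all_order all_algebra.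
Set Implicit Arguments. Unset Strict Implicit. Unset Printing Implicit Defensive.
Import Order.TTheory GRing.Theory Num.Theory.

(* A "k-colouring" of positions of a word w of length n: f i = Some c puts
   position i into the c-th subsequence, f i = None leaves it out.
   The colour classes are automatically pairwise disjoint. *)
Definition valid_coloring (d n k : nat) (w : n.-tuple 'I_d)
    (f : {ffun 'I_n -> option 'I_k}) : bool :=
  [forall i : 'I_n, forall j : 'I_n,
     ((i < j)%N && (f i != None) && (f i == f j)) ==>
       (nat_of_ord (tnth w i) <= nat_of_ord (tnth w j))%N].

Definition coloring_size (n k : nat) (f : {ffun 'I_n -> option 'I_k}) : nat :=
  #|[set i : 'I_n | f i != None]|.

(* lambda_1 + ... + lambda_k for lambda = shRSK(w): the maximum total length
   of k disjoint weakly increasing subsequences of w. *)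
Definition shRSK_topsum (d n k : nat) (w : n.-tuple 'I_d) : nat :=
  \max_(f : {ffun 'I_n -> option 'I_k} | valid_coloring w f) coloring_size f.

Definition word_prob (R : pzRingType) (d n : nat) (alpha : 'I_d -> R)
    (w : n.-tuple 'I_d) : R :=
  \prod_(i < n) alpha (tnth w i).

Definition SW_excess (R : pzRingType) (d k n : nat) (alpha : 'I_d -> R) : R :=
  (\sum_(w : n.-tuple 'I_d) word_prob alpha w * (shRSK_topsum k w)%:R)%R
  - ((\sum_(i : 'I_d | (i < k)%N) alpha i) * n%:R)%R.

(* Main.v *)
Require Import Defs.
From HB Require Import structures.
From mathcomp Require Import all_boot all_order all_algebra.
From mathcomp Require Import lra.
Import Order.TTheory GRing.Theory Num.Theory.
Set Implicit Arguments. Unset Strict Implicit. Unset Printing Implicit Defensive.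

Lemma inj_card (A : finType) (m : nat) (T : {set A}) (phi : A -> 'I_m) :
  {in T &, injective phi} -> #|T| <= m.
Proof.
move=> inj; rewrite -(card_in_imset inj).
by apply: leq_trans (max_card _) _; rewrite card_ord.
Qed.

Lemma inj_from_lt (m : nat) (B : eqType) (T : {set 'I_m}) (phi : 'I_m -> B) :
  (forall b c, b \in T -> c \in T -> (b < c)%N -> phi b != phi c) ->
  {in T &, injective phi}.
Proof.
move=> H b c hb hc e; case: (ltngtP b c) => [lt|lt|eq].
- by move: (H _ _ hb hc lt); rewrite e eqxx.
- by move: (H _ _ hc hb lt); rewrite e eqxx.
- exact: val_inj.
Qed.

Section Comb.
Variables (d n k : nat) (x : 'I_d) (w : n.-tuple 'I_d).

Definition ext_col (f : {ffun 'I_n -> option 'I_k}) : {ffun 'I_n.+1 -> option 'I_k} :=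
  [ffun j => if unlift ord0 j is Some i then f i else None].

Lemma ext_valid f : valid_coloring w f -> valid_coloring [tuple of x :: w] (ext_col f).
Proof.
move=> /forallP V; apply/forallP => i; apply/forallP => j; apply/implyP.
rewrite !ffunE.
case: (unliftP ord0 i) => [i'|] ->; last by rewrite eqxx andbF.
case: (unliftP ord0 j) => [j'|] ->; last by rewrite ltn0.
rewrite !tnthS !lift0 ltnS => H.
by move: (V i') => /forallP /(_ j') /implyP; apply.
Qed.

Lemma ext_size f : coloring_size (ext_col f) = coloring_size f.
Proof.
rewrite /coloring_size.
have -> : [set j : 'I_n.+1 | ext_col f j != None] =
          lift ord0 @: [set i | f i != None].
  apply/setP => j; rewrite !inE ffunE.
  case: (unliftP ord0 j) => [j'|] ->.
    by rewrite mem_imset ?inE //; exact: lift_inj.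
  apply/esym/negbTE/imsetP => -[i _] /eqP.
  by rewrite (negbTE (neq_lift _ _)).
by rewrite card_imset //; exact: lift_inj.
Qed.

Lemma topsum_mono : shRSK_topsum k w <= shRSK_topsum k [tuple of x :: w].
Proof.
apply/bigmax_leqP => f vf; rewrite -ext_size.
exact: (leq_bigmax_cond _ (ext_valid vf)).
Qed.

End Comb.

Section Main.
Variables (d n k' : nat) (x : 'I_d) (w : n.-tuple 'I_d).
Hypothesis hxk : (x < k'.+1)%N.
Variable f : {ffun 'I_n -> option 'I_k'.+1}.
Hypothesis vf : valid_coloring w f.

Definition w' : n.+1.-tuple 'I_d := [tuple of x :: w].

Definition S' : {set 'I_n.+1} :=
  [set j | if unlift ord0 j is Some i then f i != None else true].

Definition decr (T : {set 'I_n.+1}) : bool :=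
  [forall a in T, forall b in T,
     (a < b)%N ==> (nat_of_ord (tnth w' b) < nat_of_ord (tnth w' a))%N].

Definition adm (j : 'I_n.+1) (T : {set 'I_n.+1}) : bool :=
  [&& T \subset S', decr T, j \in T & [forall a in T, (a <= j)%N]].

Definition hgt (j : 'I_n.+1) : nat := \max_(T | adm j T) #|T|.

Lemma decr_lt (T : {set 'I_n.+1}) (a b : 'I_n.+1) : decr T -> a \in T -> b \in T -> (a < b)%N ->
  (nat_of_ord (tnth w' b) < nat_of_ord (tnth w' a))%N.
Proof.
by move=> /forallP /(_ a) /implyP /(_ _) /forallP H ha hb lt;
   move: (H ha b) => /implyP /(_ hb) /implyP; apply.
Qed.

Lemma bound (T : {set 'I_n.+1}) : T \subset S' -> decr T -> (#|T| <= k'.+1)%N.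
Proof.
move=> sub dT.
have [h0|h0] := boolP (ord0 \in T).
  have le b : b \in T -> (nat_of_ord (tnth w' b) <= x)%N.
    move=> hb; case: (unliftP ord0 b) => [b'|] eb.
      apply: ltnW; have := decr_lt dT h0 hb; rewrite eb lift0 tnth0; exact.
    by rewrite eb tnth0.
  apply: (@inj_card _ _ _ (fun b => inord (tnth w' b))).
  apply: inj_from_lt => b c hb hc lt; apply/negP => /eqP /(congr1 val).
  rewrite /= !inordK; last 2 first.
  - exact: leq_ltn_trans (le _ hc) hxk.
  - exact: leq_ltn_trans (le _ hb) hxk.
  move=> e; have := decr_lt dT hb hc lt; by rewrite e ltnn.
apply: (@inj_card _ _ _ (fun b => if unlift ord0 b is Some i then odflt ord0 (f i) else ord0)).
apply: inj_from_lt => b c hb hc lt.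
case: (unliftP ord0 b) => [b'|] eb; last by move: hb; rewrite eb (negbTE h0).
case: (unliftP ord0 c) => [c'|] ec; last by move: hc; rewrite ec (negbTE h0).
have := subsetP sub _ hb; have := subsetP sub _ hc.
rewrite !inE eb ec !liftK.
case E1: (f b') => [u|//]; case E2: (f c') => [v|//] _ _ /=.
apply/negP => /eqP euv.
have := decr_lt dT hb hc lt; rewrite eb ec !tnthS.
move: vf => /forallP /(_ b') /forallP /(_ c') /implyP.
rewrite E1 E2 euv eqxx andbT /=.
have -> : (b' < c')%N by move: lt; rewrite eb ec !lift0.
by move=> /(_ isT) H1 H2; move: (leq_trans H2 H1); rewrite ltnn.
Qed.


Lemma adm1 j : j \in S' -> adm j [set j].
Proof.
move=> hj; apply/and4P; split.
- by rewrite sub1set.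
- apply/forallP => a; apply/implyP; rewrite inE => /eqP ->.
  apply/forallP => b; apply/implyP; rewrite inE => /eqP ->.
  by rewrite ltnn.
- by rewrite inE.
- by apply/forallP => a; apply/implyP; rewrite inE => /eqP ->.
Qed.

Lemma hgt_pos j : j \in S' -> (0 < hgt j)%N.
Proof.
move=> hj; apply: leq_trans (leq_bigmax_cond _ (adm1 hj)).
by rewrite cards1.
Qed.

Lemma hgt_le j : (hgt j <= k'.+1)%N.
Proof.
apply/bigmax_leqP => T /and4P [sub dT _ _]; exact: bound.
Qed.

Lemma hgt_lt i j : i \in S' -> j \in S' -> (i < j)%N ->
  (nat_of_ord (tnth w' j) < nat_of_ord (tnth w' i))%N -> (hgt i < hgt j)%N.
Proof.
move=> hi hj lt ltw.
have cpos : (0 < #|[pred T | adm i T]|)%N.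
  by apply/card_gt0P; exists [set i]; rewrite inE adm1.
have [T0 hT0 e] := @eq_bigmax_cond _ [pred T | adm i T] (fun T => #|T|) cpos.
have -> : hgt i = #|T0|.
  by rewrite /hgt -e; apply: eq_bigl => T; rewrite inE.
move: hT0; rewrite inE => /and4P [sub dT iT le].
have jT : j \notin T0.
  apply/negP => jT; move: le => /forallP /(_ j) /implyP /(_ jT).
  by rewrite leqNgt lt.
have leT a : a \in T0 -> (a <= i)%N by move=> aT; move: le => /forallP /(_ a) /implyP; apply.
have wT a : a \in T0 -> (nat_of_ord (tnth w' j) < nat_of_ord (tnth w' a))%N.
  move=> aT; case: (ltngtP a i) => [ai|ia|/val_inj ->//].
  - exact: ltn_trans ltw (decr_lt dT aT iT ai).
  - by move: (leT _ aT); rewrite leqNgt ia.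
have: adm j (j |: T0).
  apply/and4P; split.
  - by rewrite subUset sub1set hj sub.
  - apply/forallP => a; apply/implyP; rewrite !inE => /orP [/eqP ->|aT];
      apply/forallP => b; apply/implyP; rewrite !inE => /orP [/eqP ->|bT].
    + by rewrite ltnn.
    + apply/implyP => jb; move: (leT _ bT) => bi.
      by move: (leq_trans jb (leq_trans bi (ltnW lt))); rewrite ltnn.
    + by apply/implyP => _; exact: wT.
    + by apply/implyP; exact: decr_lt dT aT bT.
  - by rewrite setU11.
  - apply/forallP => a; apply/implyP; rewrite !inE => /orP [/eqP ->//|aT].
    exact: leq_trans (leT _ aT) (ltnW lt).
move=> /(leq_bigmax_cond (F := fun T : {set 'I_n.+1} => #|T|)).
by rewrite cardsU1 jT.
Qed.

Definition gcol : {ffun 'I_n.+1 -> option 'I_k'.+1} :=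
  [ffun j => if j \in S' then Some (inord (hgt j).-1) else None].

Lemma gcol_valid : valid_coloring w' gcol.
Proof.
apply/forallP => i; apply/forallP => j; apply/implyP.
rewrite !ffunE.
case hi: (i \in S'); last by rewrite andbF.
case hj: (j \in S'); last by rewrite andbF.
move=> /andP [/andP [lt _] /eqP [] /(congr1 val)].
rewrite /= !inordK; last 2 first.
- by rewrite prednK ?hgt_le ?hgt_pos.
- by rewrite prednK ?hgt_le ?hgt_pos.
move=> e; rewrite leqNgt; apply/negP => ltw.
have := hgt_lt hi hj lt ltw.
by rewrite -(prednK (hgt_pos hi)) -(prednK (hgt_pos hj)) e ltnn.
Qed.

Lemma gcol_size : coloring_size gcol = (coloring_size f).+1.
Proof.
rewrite /coloring_size.
have -> : [set j : 'I_n.+1 | gcol j != None] =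
          ord0 |: (lift ord0 @: [set i | f i != None]).
  apply/setP => j; rewrite !inE ffunE.
  case: (unliftP ord0 j) => [j'|] ->.
    rewrite /S' inE liftK [lift _ _ == _]eq_sym (negbTE (neq_lift _ _)) /= mem_imset ?inE //.
      by case: (f j').
    exact: lift_inj.
  by rewrite /S' inE unlift_none eqxx.
rewrite cardsU1 card_imset; last exact: lift_inj.
suff -> : ord0 \notin [set lift ord0 x0 | x0 in [set i | f i != None]] by [].
apply/imsetP => -[i _] /eqP; by rewrite (negbTE (neq_lift _ _)).
Qed.

End Main.

Lemma topsum_step d n k' (x : 'I_d) (w : n.-tuple 'I_d) : (x < k'.+1)%N ->
  (shRSK_topsum k'.+1 w < shRSK_topsum k'.+1 [tuple of x :: w])%N.
Proof.
move=> hxk.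
have vnone : valid_coloring w [ffun _ => None : option 'I_k'.+1].
  by apply/forallP => i; apply/forallP => j; rewrite !ffunE eqxx andbF.
set M := shRSK_topsum _ [tuple of x :: w].
have Mpos : (0 < M)%N.
  apply: leq_trans _ (leq_bigmax_cond _ (gcol_valid hxk vnone)).
  by rewrite gcol_size.
rewrite -(prednK Mpos) ltnS.
apply/bigmax_leqP => g vg.
rewrite -ltnS (prednK Mpos) -(gcol_size x w g).
exact: leq_bigmax_cond _ (gcol_valid hxk vg).
Qed.

Local Open Scope ring_scope.

Lemma split_sum (V : nmodType) (d n : nat) (F : n.+1.-tuple 'I_d -> V) :
  \sum_(t : n.+1.-tuple 'I_d) F t =
  \sum_(x : 'I_d) \sum_(w : n.-tuple 'I_d) F [tuple of x :: w].
Proof.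
rewrite pair_big /=.
rewrite (reindex (fun p : 'I_d * n.-tuple 'I_d => [tuple of p.1 :: p.2])) //.
exists (fun t => (thead t, [tuple of behead t])).
  by move=> [a b] _ /=; rewrite theadE; congr pair; apply: val_inj.
by move=> t _ /=; rewrite [RHS]tuple_eta.
Qed.

Lemma word_prob_cons (R : pzRingType) d n (alpha : 'I_d -> R) x (w : n.-tuple 'I_d) :
  word_prob alpha [tuple of x :: w] = alpha x * word_prob alpha w.
Proof.
rewrite /word_prob big_ord_recl tnth0; congr (_ * _).
by apply: eq_bigr => i _; rewrite tnthS.
Qed.

Lemma sum_prob (R : pzRingType) d (alpha : 'I_d -> R) :
  \sum_(i < d) alpha i = 1 -> forall n,
  \sum_(w : n.-tuple 'I_d) word_prob alpha w = 1.
Proof.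
move=> hs; elim=> [|n IH].
  rewrite (eq_bigr (fun _ => 1)); last by move=> w _; rewrite /word_prob big_ord0.
  by rewrite sumr_const card_tuple expn0.
rewrite split_sum.
rewrite (eq_bigr (fun x => alpha x * \sum_(w : n.-tuple 'I_d) word_prob alpha w)).
  by rewrite -mulr_suml IH mulr1 hs.
move=> x _; rewrite mulr_sumr; apply: eq_bigr => w _; exact: word_prob_cons.
Qed.

Lemma topsum_ge d n k (x : 'I_d) (w : n.-tuple 'I_d) : (0 < k)%N ->
  (shRSK_topsum k w + (x < k) <= shRSK_topsum k [tuple of x :: w])%N.
Proof.
case: k => // k' _.
case hx: (x < k'.+1)%N; last by rewrite addn0 topsum_mono.
by rewrite addn1; exact: topsum_step.
Qed.

Lemma excess_step (R : realFieldType) (d : nat) (alpha : 'I_d -> R)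
  (alpha_nneg : forall i, 0 <= alpha i)
  (alpha_sum : \sum_(i < d) alpha i = 1) (k : nat) (hk1 : (1 <= k)%N) n :
  SW_excess k n alpha <= SW_excess k n.+1 alpha.
Proof.
set A := \sum_(i : 'I_d | (i < k)%N) alpha i.
set E := fun n => \sum_(w : n.-tuple 'I_d) word_prob alpha w * (shRSK_topsum k w)%:R.
have Pge0 m (w : m.-tuple 'I_d) : 0 <= word_prob alpha w.
  by apply: prodr_ge0 => i _.
have key : E n + A <= E n.+1.
  rewrite /E split_sum.
  apply: le_trans (_ : \sum_(x : 'I_d) \sum_(w : n.-tuple 'I_d)
      alpha x * word_prob alpha w * (shRSK_topsum k w + (x < k))%:R <= _).
    rewrite (eq_bigr (fun x : 'I_d => alpha x * E n + alpha x * (x < k)%:R)).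
      rewrite big_split /= -mulr_suml alpha_sum mul1r lerD2l /A big_mkcond /=.
      by apply: ler_sum => i _; case: ifP => _; rewrite ?mulr1 ?mulr0.
    move=> x _; rewrite /E mulr_sumr.
    rewrite (eq_bigr (fun w : n.-tuple 'I_d => alpha x * (word_prob alpha w * (shRSK_topsum k w)%:R)
                + alpha x * (x < k)%:R * word_prob alpha w)).
      by rewrite big_split /= -!mulr_sumr (sum_prob alpha_sum) mulr1.
    by move=> w _; rewrite natrD mulrDr; congr (_ + _); [rewrite mulrA | rewrite mulrAC].
  apply: ler_sum => x _; apply: ler_sum => w _.
  rewrite word_prob_cons -!mulrA; apply: ler_wpM2l => //.
  apply: ler_wpM2l => //; rewrite ler_nat; exact: topsum_ge.
rewrite /SW_excess -/A.
have -> : \sum_(w : n.+1.-tuple 'I_d) word_prob alpha w * (shRSK_topsum k w)%:R = E n.+1 by [].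
have -> : \sum_(w : n.-tuple 'I_d) word_prob alpha w * (shRSK_topsum k w)%:R = E n by [].
move: key; rewrite -addn1 natrD mulrDr mulr1; move: (E n) (E (n + 1)%N) => a b key.
by rewrite opprD addrA lerBrDr addrAC lerD2r.
Qed.

Theorem mainTheorem6 (R : realFieldType) (d : nat) (alpha : 'I_d -> R)
  (alpha_nneg : forall i, 0 <= alpha i)
  (alpha_sum : \sum_(i < d) alpha i = 1)
  (alpha_sorted : forall i j : 'I_d, (i <= j)%N -> alpha j <= alpha i)
  (k : nat) (hk1 : (1 <= k)%N) (hkd : (k <= d)%N) :
  forall m n : nat, (m <= n)%N -> SW_excess k m alpha <= SW_excess k n alpha.
Proof.
move=> m n /subnK <-; elim: (n - m)%N => [|p IH]; first by rewrite add0n.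
apply: le_trans IH _; rewrite addSn; exact: excess_step.
Qed.
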